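(* Let $G$ be a countable group, and identify $\mathbf{P}_G$ with $\{0,1\}^G$ with the product topology. Then the family of all sparse subsets of $G$ is a coanalytic subset of $\mathbf{P}_G$, and the family of all $P$-small subsets of $G$ is an analytic subset of $\mathbf{P}_G$.
   Context: $\mathbf{P}_G$ is the power set of $G$, identified with $\{0,1\}^G$ via characteristic functions (a Polish space when $G$ is countable). A subset $A\subseteq G$ is sparse if for every infinite subset $X\subseteq G$ there is a finite subset $F\subseteq X$ such that $\bigcap_{g\in F}gA$ is finite. $A$ is $P$-small if there is an injective sequence $(g_n)_{n\in\omega}$ in $G$ such that the sets $g_nA$, $n\in\omega$, are pairwise disjoint. A subset of a Polish space is analytic if it is a continuous image of a Polish space, and coanalytic if its complement is analytic. *)

(* Defs.v *)
From Stdlib Require Import Reals List.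
Open Scope R_scope.

Record group := Group {
  gcar :> Type;
  gmul : gcar -> gcar -> gcar;
  gone : gcar;
  ginv : gcar -> gcar;
  gmulA : forall x y z, gmul x (gmul y z) = gmul (gmul x y) z;
  gmul1l : forall x, gmul gone x = x;
  gmulVl : forall x, gmul (ginv x) x = gone
}.

Definition countable_type (T : Type) : Prop :=
  exists e : T -> nat, forall x y, e x = e y -> x = y.

Definition finite_set {T : Type} (X : T -> Prop) : Prop :=
  exists l : list T, forall x, X x -> In x l.
Definition infinite_set {T : Type} (X : T -> Prop) : Prop := ~ finite_set X.

(* Points of P_G = {0,1}^G are characteristic functions A : G -> bool. *)
Definition translate (G : group) (g : G) (A : G -> bool) : G -> Prop :=
  fun x => exists a, A a = true /\ x = gmul G g a.

(* A is sparse: for every infinite X ⊆ G there is a finite F ⊆ X with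
   ⋂_{g in F} gA finite (empty intersection = G). *)
Definition sparse (G : group) (A : G -> bool) : Prop :=
  forall X : G -> Prop, infinite_set X ->
    exists F : list G, (forall g, In g F -> X g) /\
      finite_set (fun x => forall g, In g F -> translate G g A x).

Definition P_small (G : group) (A : G -> bool) : Prop :=
  exists gs : nat -> G, (forall n m, gs n = gs m -> n = m) /\
    forall n m, n <> m -> forall x,
      ~ (translate G (gs n) A x /\ translate G (gs m) A x).

Definition is_metric {X : Type} (d : X -> X -> R) : Prop :=
  (forall x y, 0 <= d x y) /\ (forall x y, d x y = 0 <-> x = y) /\
  (forall x y, d x y = d y x) /\ (forall x y z, d x z <= d x y + d y z).

Definition metric_cauchy {X : Type} (d : X -> X -> R) (u : nat -> X) : Prop :=
  forall eps, 0 < eps -> exists N, forall n m, (N <= n)%nat -> (N <= m)%nat ->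
    d (u n) (u m) < eps.

Definition metric_converges {X : Type} (d : X -> X -> R) (u : nat -> X) (l : X) : Prop :=
  forall eps, 0 < eps -> exists N, forall n, (N <= n)%nat -> d (u n) l < eps.

Definition metric_complete {X : Type} (d : X -> X -> R) : Prop :=
  forall u, metric_cauchy d u -> exists l, metric_converges d u l.

(* separable: a countable dense subset (enumerated by nat, possibly with gaps,
   so that the empty space is allowed) *)
Definition metric_separable {X : Type} (d : X -> X -> R) : Prop :=
  exists D : nat -> option X, forall x eps, 0 < eps ->
    exists n y, D n = Some y /\ d x y < eps.

Definition polish {X : Type} (d : X -> X -> R) : Prop :=
  is_metric d /\ metric_complete d /\ metric_separable d.

(* Continuity into {0,1}^G with the product topology (of discrete {0,1}):
   each coordinate map is continuous, i.e. locally constant. *)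
Definition continuous_into_PG {X : Type} (d : X -> X -> R) (G : Type)
  (f : X -> (G -> bool)) : Prop :=
  forall (g : G) (x : X), exists eps, 0 < eps /\
    forall y, d x y < eps -> f y g = f x g.

Definition analytic_PG (G : Type) (S : (G -> bool) -> Prop) : Prop :=
  exists (X : Type) (d : X -> X -> R), polish d /\
    exists f : X -> (G -> bool), continuous_into_PG d G f /\
      forall A : G -> bool, S A <-> exists x, forall g, f x g = A g.

Definition coanalytic_PG (G : Type) (S : (G -> bool) -> Prop) : Prop :=
  analytic_PG G (fun A => ~ S A).

(* Main.v *)
Require Import Defs.
From Stdlib Require Import Reals List.
From Stdlib Require Import Lra Lia Classical ClassicalEpsilon FunctionalExtensionality ProofIrrelevance.
From Stdlib Require Cantor.
From Stdlib Require Import Arith.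
Open Scope R_scope.

Definition agree {I T} (eI : I -> nat) (x y : I -> T) (k : nat) : Prop :=
  forall i, (eI i < k)%nat -> x i = y i.

Lemma agree_mono {I T} eI (x y : I -> T) k k' :
  (k <= k')%nat -> agree eI x y k' -> agree eI x y k.
Proof. intros Hk H i Hi. apply H. lia. Qed.

Lemma agree_sym {I T} eI (x y : I -> T) k : agree eI x y k -> agree eI y x k.
Proof. intros H i Hi. symmetry. apply H; auto. Qed.

Lemma agree_ex {I T} eI (x y : I -> T) :
  ~ (forall k, agree eI x y k) -> exists k, agree eI x y k /\ ~ agree eI x y (S k).
Proof.
  intros H. apply not_all_ex_not in H. destruct H as [k Hk].
  induction k.
  - exfalso; apply Hk; intros i Hi; lia.
  - destruct (classic (agree eI x y k)) as [Ha|Ha].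
    + exists k; auto.
    + apply IHk, Ha.
Qed.

Definition dist {I T} (eI : I -> nat) (x y : I -> T) : R :=
  match excluded_middle_informative (forall k, agree eI x y k) with
  | left _ => 0
  | right H => / 2 ^ (proj1_sig (constructive_indefinite_description _ (agree_ex eI x y H)))
  end.

Lemma inv2pow_pos k : 0 < / 2 ^ k.
Proof. apply Rinv_0_lt_compat, pow_lt; lra. Qed.

Lemma inv2pow_le a b : (a <= b)%nat -> / 2 ^ b <= / 2 ^ a.
Proof.
  intros H. apply Rinv_le_contravar; [apply pow_lt; lra|]. apply Rle_pow; [lra|exact H].
Qed.

Lemma inv2pow_lt a b : (a < b)%nat -> / 2 ^ b < / 2 ^ a.
Proof.
  intros H. apply Rinv_lt_contravar.
  - apply Rmult_lt_0_compat; apply pow_lt; lra.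
  - apply Rlt_pow; [lra|exact H].
Qed.

Lemma inv2pow_le_iff a b : / 2 ^ b <= / 2 ^ a -> (a <= b)%nat.
Proof.
  intros H. destruct (le_lt_dec a b); auto.
  pose proof (inv2pow_lt b a l). lra.
Qed.

Lemma dist_cases {I T} eI (x y : I -> T) :
  (dist eI x y = 0 /\ forall k, agree eI x y k) \/
  exists j, dist eI x y = / 2 ^ j /\ agree eI x y j /\ ~ agree eI x y (S j).
Proof.
  unfold dist. destruct excluded_middle_informative as [H|H]; [left; auto|right].
  destruct (constructive_indefinite_description _ _) as [j Hj]; simpl.
  exists j; tauto.
Qed.

Lemma dist_le {I T} eI (x y : I -> T) k : dist eI x y <= / 2 ^ k <-> agree eI x y k.
Proof.
  destruct (dist_cases eI x y) as [[-> Ha]|[j [-> [Ha Hn]]]].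
  - split; intros; [apply Ha|]. apply Rlt_le, inv2pow_pos.
  - split; intro H.
    + apply (agree_mono _ _ _ k j); [apply inv2pow_le_iff; exact H| exact Ha].
    + apply inv2pow_le. destruct (le_lt_dec k j); auto. exfalso; apply Hn.
      apply (agree_mono _ _ _ (S j) k); [lia|exact H].
Qed.

Lemma dist_lt_agree {I T} eI (x y : I -> T) k : dist eI x y < / 2 ^ k -> agree eI x y (S k).
Proof.
  destruct (dist_cases eI x y) as [[-> Ha]|[j [-> [Ha Hn]]]]; intros H; [apply Ha|].
  destruct (le_lt_dec j k).
  - pose proof (inv2pow_le j k l). lra.
  - apply (agree_mono _ _ _ (S k) j); [lia|exact Ha].
Qed.

Lemma dist_zero {I T} eI (x y : I -> T) : dist eI x y = 0 -> x = y.
Proof.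
  destruct (dist_cases eI x y) as [[_ Ha]|[j [-> [Ha Hn]]]]; intros H.
  - apply functional_extensionality; intro i. apply (Ha (S (eI i))); lia.
  - pose proof (inv2pow_pos j). lra.
Qed.

Lemma dist_refl {I T} eI (x : I -> T) : dist eI x x = 0.
Proof.
  destruct (dist_cases eI x x) as [[H _]|[j [_ [_ Hn]]]]; auto.
  exfalso; apply Hn; intros i _; reflexivity.
Qed.

Lemma agree_uniq {I T} eI (x y : I -> T) a b :
  ~ agree eI x y (S a) -> agree eI x y b -> (b <= a)%nat.
Proof.
  intros Hn Hb. destruct (le_lt_dec b a); auto. exfalso; apply Hn.
  apply agree_mono with b; auto.
Qed.

Lemma dist_sym {I T} eI (x y : I -> T) : dist eI x y = dist eI y x.
Proof.
  destruct (dist_cases eI x y) as [[-> Ha]|[j [-> [Ha Hn]]]];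
  destruct (dist_cases eI y x) as [[-> Ha']|[j' [-> [Ha' Hn']]]]; auto.
  - exfalso; apply Hn'; apply agree_sym, Ha.
  - exfalso; apply Hn; apply agree_sym, Ha'.
  - apply agree_sym in Ha'. apply agree_sym in Ha.
    pose proof (agree_uniq _ _ _ _ _ Hn Ha'). pose proof (agree_uniq _ _ _ _ _ Hn' Ha).
    replace j' with j by lia. reflexivity.
Qed.

Lemma dist_tri {I T} eI (x y z : I -> T) : dist eI x z <= dist eI x y + dist eI y z.
Proof.
  destruct (dist_cases eI x y) as [[H0 _]|[j [Hj [Ha _]]]].
  { apply dist_zero in H0; subst. rewrite dist_refl; lra. }
  destruct (dist_cases eI y z) as [[H0 _]|[j' [Hj' [Ha' _]]]].
  { apply dist_zero in H0; subst. rewrite dist_refl; lra. }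
  rewrite Hj, Hj'. pose proof (inv2pow_pos j). pose proof (inv2pow_pos j').
  destruct (le_lt_dec j j').
  - assert (dist eI x z <= / 2 ^ j); [|lra].
    apply dist_le. intros i Hi. rewrite (Ha i Hi). apply Ha'. lia.
  - assert (dist eI x z <= / 2 ^ j'); [|lra].
    apply dist_le. intros i Hi. rewrite (Ha i ltac:(lia)). apply Ha'. lia.
Qed.

Lemma small_pow eps : 0 < eps -> exists k, / 2 ^ k < eps.
Proof.
  intros He. destruct (pow_lt_1_zero (/2) ltac:(rewrite Rabs_right; lra) eps He) as [N HN].
  exists N. specialize (HN N (le_n N)). rewrite pow_inv in HN.
  rewrite Rabs_right in HN; auto. apply Rle_ge, Rlt_le, inv2pow_pos.
Qed.

Definition sdist {I T} (eI : I -> nat) (P : (I -> T) -> Prop) (x y : sig P) : R :=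
  dist eI (proj1_sig x) (proj1_sig y).

Fixpoint code (l : list nat) : nat :=
  match l with nil => 0%nat | a :: l => S (Cantor.to_nat (a, code l)) end.

Lemma code_inj l1 l2 : code l1 = code l2 -> l1 = l2.
Proof.
  revert l2; induction l1 as [|a l1 IH]; intros [|b l2]; simpl; intros H; try discriminate; auto.
  injection H as H.
  assert (E : (a, code l1) = (b, code l2)).
  { rewrite <- (Cantor.cancel_of_to (a, code l1)), <- (Cantor.cancel_of_to (b, code l2)).
    f_equal. exact H. }
  injection E as -> E. f_equal. apply IH, E.
Qed.

Definition ext {I T} (eI : I -> nat) (eT : T -> nat) (l : list nat) (x : I -> T) : Prop :=
  forall i, (eI i < length l)%nat -> nth (eI i) l 0%nat = eT (x i).

Lemma prefix_exists {I T} (eI : I -> nat) (eT : T -> nat) :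
  (forall i j, eI i = eI j -> i = j) ->
  forall (x : I -> T) k, exists l, length l = k /\ ext eI eT l x.
Proof.
  intros HI x k. induction k as [|k [l [Hl He]]].
  - exists nil; split; auto. intros i Hi; simpl in Hi; lia.
  - destruct (classic (exists i, eI i = k)) as [[i0 Hi0]|Hn].
    + exists (l ++ eT (x i0) :: nil). split; [rewrite length_app; simpl; lia|].
      intros i Hi. rewrite length_app in Hi; simpl in Hi.
      destruct (Nat.eq_dec (eI i) k) as [E|E].
      * rewrite app_nth2 by lia. rewrite E, Hl, Nat.sub_diag. simpl.
        rewrite (HI i i0) by lia. reflexivity.
      * rewrite app_nth1 by lia. apply He. lia.
    + exists (l ++ 0%nat :: nil). split; [rewrite length_app; simpl; lia|].
      intros i Hi. rewrite length_app in Hi; simpl in Hi.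
      destruct (Nat.eq_dec (eI i) k) as [E|E].
      * exfalso; apply Hn; exists i; auto.
      * rewrite app_nth1 by lia. apply He. lia.
Qed.

Lemma polish_closed {I T} (eI : I -> nat) (eT : T -> nat) (P : (I -> T) -> Prop) :
  (forall i j, eI i = eI j -> i = j) -> (forall a b, eT a = eT b -> a = b) ->
  (forall z, (forall k, exists y, P y /\ agree eI z y k) -> P z) ->
  polish (sdist eI P).
Proof.
  intros HI HT HP. unfold sdist. split; [|split].
  - split; [|split; [|split]].
    + intros x y. destruct (dist_cases eI (proj1_sig x) (proj1_sig y)) as [[-> _]|[j [-> _]]];
        [lra| apply Rlt_le, inv2pow_pos].
    + intros [x Px] [y Py]; simpl. split; intro H.
      * apply dist_zero in H. subst. f_equal. apply proof_irrelevance.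
      * injection H as ->. apply dist_refl.
    + intros; apply dist_sym.
    + intros; apply dist_tri.
  - intros u Hu.
    assert (HN : forall k, exists N, forall n m, (N <= n)%nat -> (N <= m)%nat ->
      agree eI (proj1_sig (u n)) (proj1_sig (u m)) (S k)).
    { intro k. destruct (Hu (/2^k) (inv2pow_pos k)) as [N HN]. exists N.
      intros; apply dist_lt_agree; apply HN; auto. }
    pose (N := fun k => proj1_sig (constructive_indefinite_description _ (HN k))).
    assert (HNs : forall k n m, (N k <= n)%nat -> (N k <= m)%nat ->
      agree eI (proj1_sig (u n)) (proj1_sig (u m)) (S k)).
    { intro k. exact (proj2_sig (constructive_indefinite_description _ (HN k))). }
    pose (l := fun i => proj1_sig (u (N (eI i))) i).
    assert (Hl : forall k n i, (N k <= n)%nat -> (eI i <= k)%nat -> proj1_sig (u n) i = l i).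
    { intros k n i Hn Hi. unfold l.
      transitivity (proj1_sig (u (Nat.max n (N (eI i)))) i).
      - apply (HNs k n (Nat.max n (N (eI i)))); lia.
      - apply (HNs (eI i) (Nat.max n (N (eI i))) (N (eI i))); lia. }
    assert (Pl : P l).
    { apply HP. intros k. exists (proj1_sig (u (N k))). split; [exact (proj2_sig _)|].
      intros i Hi. symmetry. apply (Hl k); lia. }
    exists (exist _ l Pl). intros eps Heps.
    destruct (small_pow eps Heps) as [k Hk].
    exists (N k). intros n Hn. simpl. apply Rle_lt_trans with (/2^k); [|exact Hk].
    apply dist_le. intros i Hi. apply (Hl k); lia.
  - exists (fun n => match excluded_middle_informative
                 (exists y : sig P, exists l, code l = n /\ ext eI eT l (proj1_sig y)) with
               | left H => Some (proj1_sig (constructive_indefinite_description _ H))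
               | right _ => None end).
    intros x eps Heps. destruct (small_pow eps Heps) as [k Hk].
    destruct (prefix_exists eI eT HI (proj1_sig x) k) as [l [Hl Hx]].
    exists (code l). destruct excluded_middle_informative as [H|H].
    + destruct (constructive_indefinite_description _ H) as [y [l' [Hc Hy]]]; simpl.
      apply code_inj in Hc; subst l'.
      exists y; split; auto. apply Rle_lt_trans with (/2^k); [|exact Hk].
      apply dist_le. intros i Hi. apply HT. rewrite <- Hx, <- Hy; auto; lia.
    + exfalso; apply H. exists x, l; auto.
Qed.

Lemma cont_coord {I T G} (eI : I -> nat) (P : (I -> T) -> Prop) (idx : G -> I)
  (h : G -> T -> bool) :
  continuous_into_PG (sdist eI P) G (fun x g => h g (proj1_sig x (idx g))).
Proof.
  intros g x. exists (/2^(eI (idx g))). split; [apply inv2pow_pos|].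
  intros y Hy. apply dist_lt_agree in Hy. rewrite <- (Hy (idx g)); [reflexivity|lia].
Qed.

Lemma le_fold_max {I} (eI : I -> nat) (L : list I) i :
  In i L -> (eI i <= fold_right Nat.max 0%nat (map eI L))%nat.
Proof.
  induction L as [|a L IH]; simpl; [tauto|]. intros [->|H]; [lia|]. specialize (IH H); lia.
Qed.

Lemma approx {I T} (eI : I -> nat) (P : (I -> T) -> Prop) z :
  (forall k, exists y, P y /\ agree eI z y k) ->
  forall L : list I, exists y, P y /\ forall i, In i L -> z i = y i.
Proof.
  intros H L. destruct (H (S (fold_right Nat.max 0%nat (map eI L)))) as [y [Py Hy]].
  exists y; split; auto. intros i Hi. apply Hy. pose proof (le_fold_max eI L i Hi). lia.
Qed.

Lemma gmulV (G : group) (x : G) : gmul G x (ginv G x) = gone G.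
Proof.
  set (y := gmul G x (ginv G x)).
  assert (yy : gmul G y y = y).
  { unfold y. rewrite <- gmulA. rewrite (gmulA G (ginv G x) x (ginv G x)).
    rewrite gmulVl, gmul1l. reflexivity. }
  assert (H : gmul G (ginv G y) (gmul G y y) = y) by (rewrite gmulA, gmulVl, gmul1l; reflexivity).
  rewrite yy, gmulVl in H. symmetry; exact H.
Qed.

Lemma translate_iff (G : group) g (A : G -> bool) z :
  translate G g A z <-> A (gmul G (ginv G g) z) = true.
Proof.
  split.
  - intros [a [Ha ->]]. rewrite gmulA, gmulVl, gmul1l. exact Ha.
  - intros H. exists (gmul G (ginv G g) z). split; auto.
    rewrite gmulA, gmulV, gmul1l. reflexivity.
Qed.

Fixpoint build {T} (c : list T -> T) (n : nat) : list T :=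
  match n with 0%nat => nil | S n => build c n ++ c (build c n) :: nil end.

Lemma infinite_seq {T} (X : T -> Prop) : infinite_set X ->
  exists s : nat -> T, (forall n m, s n = s m -> n = m) /\ forall n, X (s n).
Proof.
  intros H.
  assert (Hc : forall l : list T, exists x, X x /\ ~ In x l).
  { intro l. apply NNPP; intro Hn. apply H. exists l. intros x Hx. apply NNPP; intro Hi.
    apply Hn; exists x; auto. }
  pose (c := fun l => proj1_sig (constructive_indefinite_description _ (Hc l))).
  assert (Hcs : forall l, X (c l) /\ ~ In (c l) l).
  { intro l. exact (proj2_sig (constructive_indefinite_description _ (Hc l))). }
  assert (Hin : forall n m, (m < n)%nat -> In (c (build c m)) (build c n)).
  { induction n; intros m Hm; [lia|]. simpl. apply in_or_app.
    destruct (Nat.eq_dec m n); [subst; right; left; reflexivity| left; apply IHn; lia]. }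
  exists (fun n => c (build c n)). split.
  - intros n m Heq. destruct (Nat.lt_trichotomy n m) as [Hl|[He|Hl]]; auto; exfalso.
    + apply (proj2 (Hcs (build c m))). rewrite <- Heq. apply Hin; auto.
    + apply (proj2 (Hcs (build c n))). rewrite Heq. apply Hin; auto.
  - intro n; apply Hcs.
Qed.

Lemma inj_infinite {T} (s : nat -> T) (X : T -> Prop) :
  (forall n m, s n = s m -> n = m) -> (forall n, X (s n)) -> infinite_set X.
Proof.
  intros Hi Hx [l Hl].
  assert (H1 : NoDup (map s (seq 0 (S (length l))))).
  { apply NoDup_map_NoDup_ForallPairs; [intros a b _ _; apply Hi| apply seq_NoDup]. }
  assert (H2 : incl (map s (seq 0 (S (length l)))) l).
  { intros y Hy. apply in_map_iff in Hy. destruct Hy as [n [<- _]]. apply Hl, Hx. }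
  pose proof (NoDup_incl_length H1 H2). rewrite length_map, length_seq in H. lia.
Qed.

Lemma bound_indices {T} (s : nat -> T) (F : list T) :
  (forall g, In g F -> exists j, g = s j) ->
  exists k, forall g, In g F -> exists j, (j < k)%nat /\ g = s j.
Proof.
  induction F as [|a F IH]; intros H.
  - exists 0%nat; intros g [].
  - destruct IH as [k Hk]; [intros; apply H; right; auto|].
    destruct (H a (or_introl eq_refl)) as [j Hj].
    exists (Nat.max k (S j)). intros g [<-|Hg].
    + exists j; split; [lia|auto].
    + destruct (Hk g Hg) as [j' [? ?]]; exists j'; split; [lia|auto].
Qed.


Definition eTc {G : group} (eG : G -> nat) (p : bool * G) : nat :=
  (2 * eG (snd p) + (if fst p then 1 else 0))%nat.

Lemma eTc_inj {G : group} (eG : G -> nat) : (forall x y, eG x = eG y -> x = y) ->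
  forall a b : bool * G, eTc eG a = eTc eG b -> a = b.
Proof.
  intros HG [[|] g] [[|] g']; unfold eTc; simpl; intros H; try lia;
  rewrite (HG g g') by lia; reflexivity.
Qed.

Definition eIs {G : group} (eG : G -> nat) (i : G + nat) : nat :=
  match i with inl g => (2 * eG g)%nat | inr n => (2 * n + 1)%nat end.

Definition Ps (G : group) (z : G + nat -> bool * G) : Prop :=
  (forall n m, snd (z (inr n)) = snd (z (inr m)) -> n = m) /\
  (forall n m x, n <> m ->
     ~ (fst (z (inl (gmul G (ginv G (snd (z (inr n)))) x))) = true /\
        fst (z (inl (gmul G (ginv G (snd (z (inr m)))) x))) = true)).

Definition eIc {G : group} (eG : G -> nat) (i : nat + ((nat * nat) + G)) : nat :=
  match i with
  | inl n => (3 * n)%nat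
  | inr (inl p) => (3 * Cantor.to_nat p + 1)%nat
  | inr (inr g) => (3 * eG g + 2)%nat
  end.

Definition xs {G : group} (z : nat + ((nat * nat) + G) -> bool * G) n := snd (z (inl n)).
Definition ws {G : group} (z : nat + ((nat * nat) + G) -> bool * G) k m :=
  snd (z (inr (inl (k, m)))).
Definition As {G : group} (z : nat + ((nat * nat) + G) -> bool * G) g := fst (z (inr (inr g))).

Definition Pc (G : group) (z : nat + ((nat * nat) + G) -> bool * G) : Prop :=
  (forall n m, xs z n = xs z m -> n = m) /\
  (forall k m m', ws z k m = ws z k m' -> m = m') /\
  (forall k m j, (j < k)%nat -> As z (gmul G (ginv G (xs z j)) (ws z k m)) = true).

Lemma Cantor_inj p q : Cantor.to_nat p = Cantor.to_nat q -> p = q.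
Proof.
  intros H. rewrite <- (Cantor.cancel_of_to p), <- (Cantor.cancel_of_to q). f_equal; exact H.
Qed.

Lemma nonsparse_analytic (G : group) (eG : G -> nat) (HG : forall x y, eG x = eG y -> x = y) :
  analytic_PG G (fun A => ~ sparse G A).
Proof.
  exists (sig (Pc G)), (sdist (eIc eG) (Pc G)). split.
  { apply polish_closed with (eTc eG).
    - intros [n|[p|g]] [n'|[p'|g']]; simpl; intros H; try lia.
      + f_equal; lia.
      + do 2 f_equal. apply Cantor_inj; lia.
      + do 2 f_equal. apply HG; lia.
    - apply eTc_inj, HG.
    - intros z Hz. pose proof (approx _ _ z Hz) as Ha. split; [|split].
      + intros n m H. destruct (Ha (inl n :: inl m :: nil)) as [y [Py Hy]].
        unfold xs in H. rewrite (Hy (inl n)), (Hy (inl m)) in H by (simpl; tauto).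
        apply (proj1 Py). exact H.
      + intros k m m' H. destruct (Ha (inr (inl (k, m)) :: inr (inl (k, m')) :: nil)) as [y [Py Hy]].
        unfold ws in H. rewrite (Hy (inr (inl (k, m)))), (Hy (inr (inl (k, m')))) in H by (simpl; tauto).
        apply (proj1 (proj2 Py) k). exact H.
      + intros k m j Hj.
        destruct (Ha (inl j :: inr (inl (k, m)) ::
                      inr (inr (gmul G (ginv G (xs z j)) (ws z k m))) :: nil)) as [y [Py Hy]].
        unfold As. rewrite (Hy (inr (inr _))) by (simpl; tauto).
        unfold xs, ws. rewrite (Hy (inl j)), (Hy (inr (inl (k, m)))) by (simpl; tauto).
        apply (proj2 (proj2 Py)). exact Hj. }
  exists (fun x g => (fun (_ : G) (t : bool * G) => fst t) g (proj1_sig x ((fun g => inr (inr g)) g))).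
  split; [exact (cont_coord (eIc eG) (Pc G) (fun g => inr (inr g)) (fun _ t => fst t))|].
  intros A. simpl. split.
  - intros Hns. unfold sparse in Hns. apply not_all_ex_not in Hns. destruct Hns as [X HX].
    apply imply_to_and in HX. destruct HX as [Hinf HnF].
    destruct (infinite_seq X Hinf) as [s [Hs HsX]].
    assert (HW : forall k, exists w : nat -> G, (forall m m', w m = w m' -> m = m') /\
              forall m g, In g (map s (seq 0 k)) -> translate G g A (w m)).
    { intro k. destruct (infinite_seq (fun x => forall g, In g (map s (seq 0 k)) -> translate G g A x)) as [w [Hw1 Hw2]].
      2: { exists w; split; auto. }
      intros Hfin. apply HnF. exists (map s (seq 0 k)). split; auto.
      intros g Hg. apply in_map_iff in Hg. destruct Hg as [n [<- _]]. apply HsX. }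
    pose (W := fun k => proj1_sig (constructive_indefinite_description _ (HW k))).
    assert (HWs : forall k, (forall m m', W k m = W k m' -> m = m') /\
              forall m g, In g (map s (seq 0 k)) -> translate G g A (W k m)).
    { intro k. exact (proj2_sig (constructive_indefinite_description _ (HW k))). }
    pose (z := fun i : nat + ((nat * nat) + G) => match i with
                 | inl n => (false, s n)
                 | inr (inl (k, m)) => (false, W k m)
                 | inr (inr g) => (A g, gone G) end).
    assert (Pz : Pc G z).
    { split; [|split].
      - intros n m; unfold xs; simpl. apply Hs.
      - intros k m m'; unfold ws; simpl. apply (proj1 (HWs k)).
      - intros k m j Hj; unfold As, xs, ws; simpl. apply translate_iff.
        apply (proj2 (HWs k)). apply in_map. apply in_seq. lia. }
    exists (exist _ z Pz). intro g. reflexivity.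
  - intros [[z [Hx [Hw Hm]]] Hf] Hsp. simpl in Hf.
    destruct (Hsp (fun g => exists n, g = xs z n)) as [F [HF Hfin]].
    { apply (inj_infinite (xs z)); [exact Hx| intro n; exists n; reflexivity]. }
    destruct (bound_indices (xs z) F HF) as [k Hk].
    apply (inj_infinite (ws z k) _ (Hw k)) in Hfin; auto.
    intros m g Hg. destruct (Hk g Hg) as [j [Hj ->]]. apply translate_iff.
    rewrite <- Hf. apply Hm; exact Hj.
Qed.

Lemma Psmall_analytic (G : group) (eG : G -> nat) (HG : forall x y, eG x = eG y -> x = y) :
  analytic_PG G (P_small G).
Proof.
  exists (sig (Ps G)), (sdist (eIs eG) (Ps G)). split.
  { apply polish_closed with (eTc eG).
    - intros [g|n] [g'|n']; simpl; intros H; try lia.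
      + f_equal. apply HG; lia.
      + f_equal; lia.
    - apply eTc_inj, HG.
    - intros z Hz. pose proof (approx _ _ z Hz) as Ha. split.
      + intros n m H. destruct (Ha (inr n :: inr m :: nil)) as [y [Py Hy]].
        rewrite (Hy (inr n)), (Hy (inr m)) in H by (simpl; tauto).
        apply (proj1 Py). exact H.
      + intros n m x Hnm [H1 H2].
        destruct (Ha (inr n :: inr m :: inl (gmul G (ginv G (snd (z (inr n)))) x) ::
                      inl (gmul G (ginv G (snd (z (inr m)))) x) :: nil)) as [y [Py Hy]].
        rewrite (Hy (inl _)) in H1 by (simpl; tauto).
        rewrite (Hy (inl _)) in H2 by (simpl; tauto).
        rewrite (Hy (inr n)) in H1 by (simpl; tauto).
        rewrite (Hy (inr m)) in H2 by (simpl; tauto).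
        apply (proj2 Py n m x Hnm). split; assumption. }
  exists (fun x g => (fun (_ : G) (t : bool * G) => fst t) g (proj1_sig x ((fun g => inl g) g))).
  split; [exact (cont_coord (eIs eG) (Ps G) (fun g => inl g) (fun _ t => fst t))|].
  intros A. simpl. split.
  - intros [gs [Hinj Hdis]].
    pose (z := fun i : G + nat => match i with inl g => (A g, gone G) | inr n => (false, gs n) end).
    assert (Pz : Ps G z).
    { split.
      - intros n m; simpl. apply Hinj.
      - intros n m x Hnm; simpl. intros [H1 H2]. apply (Hdis n m Hnm x).
        split; apply translate_iff; assumption. }
    exists (exist _ z Pz). intro g. reflexivity.
  - intros [[z [Hinj Hdis]] Hf]. simpl in Hf.
    exists (fun n => snd (z (inr n))). split; auto.
    intros n m Hnm x [H1 H2]. apply translate_iff in H1. apply translate_iff in H2.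
    apply (Hdis n m x Hnm). rewrite !Hf. split; assumption.
Qed.

Theorem theorem3p3 (G : group) (hG : countable_type G) :
  coanalytic_PG G (sparse G) /\ analytic_PG G (P_small G).
Proof.
  destruct hG as [eG HG]. split.
  - apply nonsparse_analytic with eG; exact HG.
  - apply Psmall_analytic with eG; exact HG.
Qed.
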